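(* Let $n\ge1$ and $1\le k\le n$. The reverse-admissible $k\times k$ minors $(I_2,I_1)$ are in a weight preserving bijection with the single column symplectic PBW tableaux of length $k$.
   Context: Let $\bar i:=2n+1-i$ and $\mathcal N=\{1<\dots<n<\bar n<\dots<\bar1\}$; $\varepsilon_1,\dots,\varepsilon_n$ is the standard basis of the dual Cartan of $\mathfrak{sp}_{2n}$. A $k\times k$ minor is a pair $(I_2,I_1)$ of subsets of $\{1,\dots,n\}$ with $|I_1|+|I_2|=k$; its entries are the elements $i\in I_1$ and $\bar i$ for $i\in I_2$, and its weight is $\sum_{i\in I_1}\varepsilon_i-\sum_{i\in I_2}\varepsilon_i$. With $\Gamma=I_1\cap I_2=\{\gamma_1<\dots<\gamma_\lambda\}$, the minor is reverse-admissible if there is $T=\{\tau_1<\dots<\tau_\lambda\}\subset\{1,\dots,n\}\setminus(I_1\cup I_2)$ with $|T|=|\Gamma|$ and $\tau_i\le\gamma_i$ for all $i$. A single column symplectic PBW tableau of length $k$ is a column of $k$ boxes with entries $T_1,\dots,T_k\in\mathcal N$ (top to bottom) such that: (i) if $T_i\le k$ then $T_i=i$; (ii) if $i_1<i_2$ and $T_{i_1}\ne i_1$ then $T_{i_1}>T_{i_2}$; (iii) if $T_i=i$ and $T_{i'}=\bar i$ for some $i'$, then $i'<i$, whenever $i<k$. Its weight is $\sum_{i\le n\text{ appearing}}\varepsilon_i-\sum_{j\le n:\ \bar j\text{ appearing}}\varepsilon_j$. *)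

(* Defs.v *)
From mathcomp Require Import all_boot all_algebra.
Set Implicit Arguments. Unset Strict Implicit. Unset Printing Implicit Defensive.
Import GRing.Theory.

(* Conventions:
   - An element j : 'I_n of a subset of {1..n} represents the integer j+1.
   - The alphabet N = {1<...<n<nbar<...<1bar} is encoded by integers 1..2n
     with ibar = 2n+1-i (as in the paper); an entry is e : 'I_(2n).+1 with
     the side condition 1 <= e.
   - A position p : 'I_k in a column represents the row p+1 (top = 1).
   - A weight sum_i a_i eps_i is the function i |-> a_i, i.e. 'I_n -> int
     (j : 'I_n standing for eps_(j+1)). *)

(* A minor (I_2, I_1): first component I_2, second I_1. *)
Definition minor (n : nat) : Type := ({set 'I_n} * {set 'I_n})%type.

Definition is_kminor (n k : nat) (m : minor n) : bool :=
  #|m.2| + #|m.1| == k.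

Definition sorted_elems (n : nat) (A : {set 'I_n}) : seq nat :=
  sort leq [seq (val x).+1 | x <- enum A].

Definition reverse_admissible (n : nat) (m : minor n) : bool :=
  let I2 := m.1 in let I1 := m.2 in
  let G := I1 :&: I2 in
  [exists T : {set 'I_n},
     [&& T \subset ~: (I1 :|: I2), #|T| == #|G| &
         [forall j : 'I_n, (j < #|G|)%N ==>
            (nth 0 (sorted_elems T) j <= nth 0 (sorted_elems G) j)%N]]].

Definition minor_weight (n : nat) (m : minor n) : {ffun 'I_n -> int} :=
  [ffun j => ((j \in m.2 : nat)%:Z - (j \in m.1 : nat)%:Z)%R].

Definition column (n k : nat) : Type := {ffun 'I_k -> 'I_(2 * n).+1}.

Definition is_spPBW (n k : nat) (T : column n k) : bool :=
  let e := fun p : 'I_k => val (T p) in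
  [&& [forall p : 'I_k, 1 <= e p]%N,
      (* (i) *)
      [forall p : 'I_k, (e p <= k)%N ==> (e p == p.+1)],
      (* (ii) *)
      [forall p1 : 'I_k, forall p2 : 'I_k,
          ((p1 < p2)%N && (e p1 != p1.+1)) ==> (e p2 < e p1)%N] &
      (* (iii): for rows i = p+1 < k *)
      [forall p : 'I_k, forall p' : 'I_k,
          [&& (p.+1 < k)%N, e p == p.+1 & e p' == (2 * n).+1 - p.+1]
            ==> (p' < p)%N]].

Definition column_weight (n k : nat) (T : column n k) : {ffun 'I_n -> int} :=
  [ffun j : 'I_n =>
     (([exists p : 'I_k, val (T p) == (val j).+1] : nat)%:Z
      - ([exists p : 'I_k, val (T p) == ((2 * n).+1 - (val j).+1)%N] : nat)%:Z)%R].

(* Main.v *)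
Require Import Defs.
From mathcomp Require Import all_boot all_algebra.
From mathcomp Require Import zify.
Set Implicit Arguments. Unset Strict Implicit. Unset Printing Implicit Defensive.

Lemma count_card m (P : pred nat) : count P (iota 0 m) = #|[set i : 'I_m | P i]|.
Proof.
rewrite -sum1_count; have -> : iota 0 m = index_iota 0 m by rewrite /index_iota subn0.
by rewrite big_mkord sum1dep_card.
Qed.

Lemma count_enum_card (T : finType) (A : {set T}) (Q : pred T) :
  count Q (enum A) = #|[set a in A | Q a]|.
Proof. by rewrite -sum1_count big_enum_cond sum1dep_card. Qed.

Lemma nth_mono s i j : sorted ltn s -> i <= j -> j < size s -> nth 0 s i <= nth 0 s j.
Proof.
move=> ss ij js; rewrite leq_eqVlt in ij; case/orP: ij => [/eqP->//|ij].
apply: ltnW; apply: (sorted_ltn_nth ltn_trans 0 ss) => //; rewrite inE; lia.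
Qed.

Lemma nth_smono s i j : sorted ltn s -> i < j -> j < size s -> nth 0 s i < nth 0 s j.
Proof.
move=> ss ij js; apply: (sorted_ltn_nth ltn_trans 0 ss) => //; rewrite inE; lia.
Qed.

Lemma count_drop0 s i x : sorted ltn s -> x < nth 0 s i ->
  count (fun y => y <= x) (drop i s) = 0.
Proof.
move=> ss hx; apply/eqP; rewrite -leqn0 leqNgt -has_count; apply/(has_nthP 0) => -[t].
rewrite size_drop nth_drop => ht.
have := nth_mono ss (leq_addr t i) (_ : i + t < size s). lia.
Qed.

Lemma count_take_le (P : pred nat) s i : count P (take i s) <= i.
Proof. apply: leq_trans (count_size _ _) _; rewrite size_take_min; lia. Qed.

Lemma nth_le_count s j x : sorted ltn s -> j < size s -> nth 0 s j <= x ->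
  j < count (fun y => y <= x) s.
Proof.
move=> ss js hx.
rewrite -(cat_take_drop j.+1 s) count_cat.
suff -> : count (fun y => y <= x) (take j.+1 s) = j.+1 by lia.
have sz : size (take j.+1 s) = j.+1 by rewrite size_takel.
apply/eqP; rewrite -{2}sz -all_count; apply/(all_nthP 0) => i; rewrite sz => hi.
rewrite nth_take //; apply: leq_trans hx; apply: nth_mono => //.
Qed.

Lemma count_le_nth s j x : sorted ltn s -> j < count (fun y => y <= x) s ->
  nth 0 s j <= x.
Proof.
move=> ss hj; rewrite leqNgt; apply/negP => hx.
move: hj; rewrite -(cat_take_drop j s) count_cat count_drop0 //.
have := count_take_le (fun y => y <= x) s j; lia.
Qed.

Lemma count_nth_le s j : sorted ltn s -> j < size s ->
  count (fun y => y <= nth 0 s j) s <= j.+1.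
Proof.
move=> ss js; set x := nth 0 s j.
have hx : x < nth 0 s j.+1 \/ size s <= j.+1.
  case: (ltnP j.+1 (size s)) => h; [left; exact: nth_smono | by right].
case: hx => hx.
  rewrite -(cat_take_drop j.+1 s) count_cat count_drop0 //.
  have := count_take_le (fun y => y <= x) s j.+1; lia.
apply: leq_trans (count_size _ _) _; exact: hx.
Qed.

Section SE.
Variable n : nat.
Implicit Types A : {set 'I_n}.

Lemma se_sorted A : sorted ltn (sorted_elems A).
Proof.
rewrite ltn_sorted_uniq_leq sort_uniq sort_sorted ?andbT; last exact: leq_total.
rewrite (map_inj_uniq (_ : injective (fun x : 'I_n => (val x).+1))) ?enum_uniq //.
by move=> a b /succn_inj /val_inj.

Qed.

Lemma se_size A : size (sorted_elems A) = #|A|.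
Proof. by rewrite size_sort size_map cardE. Qed.

Lemma se_count A (P : pred nat) :
  count P (sorted_elems A) = #|[set a in A | P a.+1]|.
Proof. by rewrite count_sort count_map count_enum_card. Qed.

Lemma se_memP A x : reflect (exists2 a, a \in A & x = a.+1) (x \in sorted_elems A).
Proof.
rewrite mem_sort; apply: (iffP mapP) => -[a]; rewrite ?mem_enum => h1 h2; exists a; by rewrite ?mem_enum.
Qed.

Lemma card_le_set (A : {set 'I_n}) (g : nat) :
  #|[set a in A | a.+1 <= g.+1]| = #|[set a in A | a <= g]|.
Proof. by apply: eq_card => a; rewrite !inE ltnS. Qed.
End SE.

Definition HC n (I1 I2 : {set 'I_n}) :=
  forall g : 'I_n, g \in I1 :&: I2 ->
  #|[set x in I1 :&: I2 | x <= g]| <= #|[set c in ~: (I1 :|: I2) | c <= g]|.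

Lemma RA_HC n (m : minor n) : reverse_admissible m -> HC m.2 m.1.
Proof.
case: m => I2 I1 /=; rewrite /reverse_admissible /=.
set G := I1 :&: I2; set C := ~: (I1 :|: I2).
case/existsP=> T /and3P[sTC /eqP cT /forallP hT] g gG.
have ss := se_sorted G.
have gin : g.+1 \in sorted_elems G by apply/se_memP; exists g.
set j := index g.+1 (sorted_elems G).
have jlt : j < #|G| by rewrite -se_size index_mem.
have jn : j < n by apply: leq_trans jlt _; apply: leq_trans (max_card _) _; rewrite card_ord.
have nj : nth 0 (sorted_elems G) j = g.+1 by rewrite nth_index.
have h1 := count_nth_le ss (_ : j < size (sorted_elems G)).
rewrite se_size in h1; have {h1} := h1 jlt; rewrite nj se_count card_le_set => h1.
have := hT (Ordinal jn); rewrite /= jlt /= nj => h2.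
have h3 := nth_le_count (se_sorted T) (_ : j < size (sorted_elems T)) h2.
rewrite se_size cT in h3; have {h3} := h3 jlt; rewrite se_count card_le_set => h3.
apply: leq_trans h1 _; apply: leq_trans h3 _; apply: subset_leq_card.
apply/subsetP => x; rewrite !inE => /andP[xT ->]; rewrite andbT.
by have := subsetP sTC x xT; rewrite !inE.
Qed.

Lemma HC_RA n (m : minor n) : HC m.2 m.1 -> reverse_admissible m.
Proof.
case: m => I2 I1 /=; rewrite /reverse_admissible /= => hc.
set G := I1 :&: I2; set C := ~: (I1 :|: I2).
set sG := sorted_elems G; set sC := sorted_elems C.
have key : forall j, j < #|G| -> j < count (fun y => y <= nth 0 sG j) sC.
  move=> j jl.
  have jl' : j < size sG by rewrite se_size.
  have /se_memP[g gG eg] := mem_nth 0 jl'.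
  have h1 := nth_le_count (se_sorted G) jl' (leqnn _).
  rewrite -/sG se_count eg card_le_set in h1.
  rewrite se_count eg card_le_set; apply: leq_trans h1 _; exact: hc.
have Cge : #|G| <= #|C|.
  case e: #|G| => [//|l].
  have := key l; rewrite e ltnSn => /(_ isT) h.
  apply: leq_trans h _; rewrite -(se_size C); exact: count_size.
pose T := [set c : 'I_n | c.+1 \in take #|G| sC].
have sT : sorted_elems T = take #|G| sC.
  apply: (irr_sorted_eq ltn_trans); [exact: ltnn| exact: se_sorted|by apply: take_sorted; apply: se_sorted|].
  move=> x; apply/idP/idP => [/se_memP[a] | xt].
    by rewrite inE => h ->.
  apply/se_memP; have /se_memP[b bC exb] := mem_take xt.
  by exists b => //; rewrite inE -exb.
apply/existsP; exists T; apply/and3P; split.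
- apply/subsetP => c; rewrite inE => /mem_take /se_memP[a aC /succn_inj /val_inj ->] //.
- by rewrite -se_size sT size_takel // se_size.
apply/forallP => j; apply/implyP => jl.
rewrite sT nth_take //; apply: count_le_nth; first exact: se_sorted.
exact: key.
Qed.

Lemma card_disjU (T : finType) (A B : {set T}) :
  A :&: B = set0 -> #|A :|: B| = #|A| + #|B|.
Proof. by move=> h; have := cardsUI A B; rewrite h cards0 addn0. Qed.

Lemma count_lt_iota m p (P : pred nat) : p <= m ->
  count (fun i => (i < p) && P i) (iota 0 m) = count P (iota 0 p).
Proof.
move=> pm; rewrite -(subnKC pm) iotaD count_cat add0n.
have -> : count (fun i => (i < p) && P i) (iota p (m - p)) = 0.
  apply/eqP; rewrite -leqn0 leqNgt -has_count; apply/hasP => -[i].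
  by rewrite mem_iota => /andP[h _] /=; rewrite ltnNge h.
rewrite addn0; apply: eq_in_count => i; by rewrite mem_iota => /andP[_ ->].
Qed.

Lemma card_leg n (g : nat) : g < n -> #|[set x : 'I_n | x <= g]| = g.+1.
Proof.
move=> gn; rewrite -(count_card n (fun i => i <= g)).
rewrite (eq_count (a2 := fun i => (i < g.+1) && predT i)); last by move=> i; rewrite andbT.
by rewrite count_lt_iota // count_predT size_iota.
Qed.

Ltac settac x g := apply/setP => x; rewrite !inE;
  case: (ltngtP x g) => [?|?|/val_inj ->] //=.

Lemma subsetIU (T : finType) (A B : {set T}) : A :&: B \subset A :|: B.
Proof. by apply/subsetP => x; rewrite !inE => /andP[->]. Qed.

Lemma card_arith (T : finType) (P U G : {set T}) g k :
  #|P| = g.+1 -> G \subset U -> #|G| + #|U| = k -> k <= g.+1 ->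
  #|G :&: P| <= #|P :\: U|.
Proof.
move=> a sGU e hg.
have b := cardsID U P.
have c : #|(P :&: U) :|: (G :\: P)| <= #|U|.
  apply: subset_leq_card; apply/subsetP => x; rewrite !inE.
  case/orP => [/andP[_ ->] //| /andP[_ xG]]; exact: (subsetP sGU).
rewrite card_disjU in c; last first.
  by apply/setP => x; rewrite !inE; case: (x \in P); rewrite ?andbF.
have d := cardsID P G.
have f : #|G :&: P| <= #|G| by apply: subset_leq_card; apply: subsetIl.
lia.
Qed.

Section HCsets.
Variables (n : nat) (I1 I2 : {set 'I_n}) (g : 'I_n).
Hypotheses (g1 : g \in I1) (g2 : g \in I2).

Lemma HC_equiv :
  (#|[set x in I1 :&: I2 | x <= g]| <= #|[set c in ~: (I1 :|: I2) | c <= g]|) =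
  (#|[set x in I2 | x <= g]| <= #|[set j : 'I_n | (j < g) && (j \notin I1)]|).
Proof.
set A := [set j in I2 :\: I1 | j < g].
have E1 : #|[set j : 'I_n | (j < g) && (j \notin I1)]| =
          #|[set c in ~: (I1 :|: I2) | c <= g]| + #|A|.
  rewrite -card_disjU; last first.
    by apply/setP => x; rewrite !inE; case: (x \in I1); case: (x \in I2); rewrite /= ?andbF.
  apply: eq_card => x; rewrite !inE.
  case: (ltngtP x g) => [?|?|/val_inj ->]; rewrite ?g1 ?g2 //=;
  by case: (x \in I1); case: (x \in I2); rewrite /= ?andbF ?andbT.
have E2 : #|[set x in I2 | x <= g]| = #|A| + #|[set x in I1 :&: I2 | x <= g]|.
  rewrite -card_disjU; last first.
    by apply/setP => y; rewrite !inE; case: (y \in I1); case: (y \in I2); rewrite /= ?andbF.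
  apply: eq_card => y; rewrite !inE.
  case: (ltngtP y g) => [?|?|/val_inj ->]; rewrite ?g1 ?g2 //=;
  by case: (y \in I1); case: (y \in I2); rewrite /= ?andbF ?andbT.
by rewrite E1 E2 [_ + #|A|]addnC leq_add2l.
Qed.

Lemma E3 : #|[set x in I2 | x <= g]| = #|[set x in I2 | x < g]|.+1.
Proof.
have -> : [set x in I2 | x <= g] = g |: [set x in I2 | x < g].
  apply/setP => x; rewrite !inE.
  case: (ltngtP x g) => [h|h|/val_inj ->]; rewrite ?g1 ?g2 ?eqxx ?orbT //=.
    by case: eqP => [e|]; [rewrite e ltnn in h |].
  by case: eqP => [e|]; [rewrite e ltnn in h |].
by rewrite cardsU1 inE ltnn andbF.
Qed.

Lemma HC_big k : #|I1| + #|I2| = k -> k <= g.+1 ->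
  #|[set x in I1 :&: I2 | x <= g]| <= #|[set c in ~: (I1 :|: I2) | c <= g]|.
Proof.
move=> hk hg.
have eL : [set x in I1 :&: I2 | x <= g] = (I1 :&: I2) :&: [set x : 'I_n | x <= g].
  by apply/setP => x; rewrite !inE.
have eC : [set c in ~: (I1 :|: I2) | c <= g] = [set x : 'I_n | x <= g] :\: (I1 :|: I2).
  by apply/setP => x; rewrite !inE andbC.
rewrite eL eC; apply: card_arith (card_leg (ltn_ord g)) _ _ hg.
  exact: subsetIU.
by rewrite addnC cardsUI.
Qed.
End HCsets.

Lemma imset_sep (aT rT : finType) (f : aT -> rT) (D : {set aT}) (P : pred rT) :
  [set x in f @: D | P x] = f @: [set y in D | P (f y)].
Proof.
apply/setP => x; rewrite !inE; apply/andP/imsetP => [[/imsetP[y yD ->] Py] | [y]].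
  by exists y; rewrite // inE yD.
by rewrite inE => /andP[yD Py] ->; split => //; apply: imset_f.
Qed.

Section Col.
Variables (n k : nat).
Hypotheses (n_gt0 : 0 < n) (k_gt0 : 0 < k) (kn : k <= n).

Definition ordn (x : nat) : 'I_n := Ordinal (ltn_pmod x n_gt0).
Lemma val_ordn x : x < n -> val (ordn x) = x.
Proof. by move=> h; rewrite /= modn_small. Qed.

Definition minor_of (T : column n k) : minor n :=
  ([set j : 'I_n | [exists p, val (T p) == ((2 * n).+1 - (val j).+1)%N]],
   [set j : 'I_n | [exists p, val (T p) == (val j).+1]]).

Lemma weight_of T : column_weight T = minor_weight (minor_of T).
Proof. by apply/ffunP => j; rewrite !ffunE /= !inE. Qed.

Lemma spP (T : column n k) : is_spPBW T ->
  [/\ forall p, 0 < val (T p),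
      forall p, val (T p) <= k -> val (T p) = p.+1,
      forall p1 p2 : 'I_k, p1 < p2 -> val (T p1) != p1.+1 -> val (T p2) < val (T p1)
    & forall p p' : 'I_k, p.+1 < k -> val (T p) = p.+1 ->
        val (T p') = (2 * n).+1 - p.+1 -> p' < p].
Proof.
case/and4P => /forallP h1 /forallP h2 /forallP h3 /forallP h4; split.
- exact: h1.
- by move=> p; move/implyP: (h2 p) => H /H /eqP.
- move=> p1 p2 a b; have /forallP/(_ p2)/implyP := h3 p1; apply; by rewrite a b.
- move=> p p' a b c; have /forallP/(_ p')/implyP := h4 p; apply; by rewrite a b c !eqxx.
Qed.

Lemma bnd (T : column n k) p : val (T p) <= 2 * n.
Proof. by have := ltn_ord (T p); rewrite ltnS. Qed.

Lemma sp_inj (T : column n k) : is_spPBW T -> injective (fun p => val (T p)).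
Proof.
case/spP => h1 h2 h3 h4.
have H : forall p q : 'I_k, p < q -> val (T p) != val (T q).
  move=> p q pq; case: (eqVneq (val (T p)) p.+1) => [ep|np].
    apply/eqP => eq; have := h2 q; rewrite -eq ep ltn_ord => /(_ isT) /eqP.
    by rewrite eqSS => /eqP epq; rewrite epq ltnn in pq.
  by have := h3 _ _ pq np; rewrite neq_ltn => ->; rewrite orbT.
move=> p q /= e; have {}e : val (T p) = val (T q) by [].
case: (ltngtP p q) => [l|l|/val_inj //].
  by have := H _ _ l; rewrite /= e eqxx.
by have := H _ _ l; rewrite /= e eqxx.
Qed.

Section B.
Variable T : column n k.
Hypothesis spT : is_spPBW T.
Let e p := val (T p).

Definition D1 := [set p : 'I_k | e p <= n].
Definition D2 := [set p : 'I_k | n < e p].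
Definition h1 (p : 'I_k) := ordn (e p).-1.
Definition h2 (p : 'I_k) := ordn (2 * n - e p).

Lemma e_pos p : 0 < e p. Proof. by case/spP: spT => a _ _ _; apply: a. Qed.
Lemma e_bnd p : e p <= 2 * n. Proof. exact: bnd. Qed.
Lemma e_inj : injective e. Proof. exact: sp_inj. Qed.

Lemma I1_im : (minor_of T).2 = h1 @: D1.
Proof.
apply/setP => j; rewrite inE; apply/existsP/imsetP => [[p /eqP hp] | [p]].
  have {}hp : e p = j.+1 := hp.
  exists p; first by rewrite inE hp ltn_ord.
  by apply/val_inj; rewrite /h1 val_ordn hp //= ltn_ord.
rewrite inE => hp ->; exists p; apply/eqP.
change (e p = (val (h1 p)).+1).
have := e_pos p; rewrite /h1 val_ordn; first by case: (e p).
have := e_pos p; lia.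
Qed.

Lemma I2_im : (minor_of T).1 = h2 @: D2.
Proof.
apply/setP => j; rewrite inE; apply/existsP/imsetP => [[p /eqP hp] | [p]].
  have {}hp : e p = (2 * n).+1 - j.+1 := hp.
  have jn := ltn_ord j.
  exists p; first by rewrite inE hp; lia.
  apply/val_inj; rewrite /h2 val_ordn hp /=; lia.
rewrite inE => hp ->; exists p; apply/eqP.
change (e p = (2 * n).+1 - (val (h2 p)).+1).
have := e_bnd p; rewrite /h2 val_ordn; lia.
Qed.

Lemma h1_inj : {in D1 &, injective h1}.
Proof.
move=> p q; rewrite !inE => hp hq /(congr1 val); rewrite /h1 !val_ordn.
- have := e_pos p; have := e_pos q => a b c; apply: e_inj; lia.
- have := e_pos q; lia.
- have := e_pos p; lia.
Qed.

Lemma h2_inj : {in D2 &, injective h2}.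
Proof.
move=> p q; rewrite !inE => hp hq /(congr1 val); rewrite /h2 !val_ordn.
- have := e_bnd p; have := e_bnd q => a b c; apply: e_inj; lia.
- have := e_bnd q; lia.
- have := e_bnd p; lia.
Qed.

Lemma kminor_of : is_kminor k (minor_of T).
Proof.
rewrite /is_kminor I1_im I2_im !card_in_imset; [| exact: h2_inj | exact: h1_inj].
have -> : D2 = ~: D1 by apply/setP => p; rewrite !inE ltnNge.
by rewrite cardsC card_ord.
Qed.

Lemma HC_of : HC (minor_of T).2 (minor_of T).1.
Proof.
move=> g; rewrite in_setI => /andP[g1 g2].
case: (leqP k g.+1) => hg.
  have hk : #|(minor_of T).2| + #|(minor_of T).1| = k by apply/eqP; exact: kminor_of.
  exact: HC_big hk hg.
rewrite HC_equiv //.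
case/spP: spT => s1 s2 s3 s4.
move: (g1); rewrite inE => /existsP[p /eqP hp].
have {}hp : e p = g.+1 := hp.
have ep : e p = p.+1 by apply: s2; rewrite -/(e p) hp; lia.
have pg : (p : nat) = g by move: ep; rewrite hp => -[].
move: (g2); rewrite inE => /existsP[p' /eqP hp'].
have {}hp' : e p' = (2 * n).+1 - g.+1 := hp'.
have p'p : (p' : nat) < p.
  apply: s4; [rewrite pg // | exact: ep | by rewrite -/(e p') hp' pg].
have gn := ltn_ord g.
have ne' : e p' != p'.+1 by rewrite hp'; apply/eqP; lia.
set I1 := (minor_of T).2; set I2 := (minor_of T).1.
have c1 : #|[set x in I2 | x <= g]| = #|[set q in D2 | h2 q <= g]|.
  rewrite /I2 I2_im imset_sep card_in_imset //.
  by move=> a b /setIdP[a' _] /setIdP[b' _]; apply: (h2_inj a' b').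
have c2 : #|[set q in D2 | h2 q <= g]| <= #|[set q : 'I_k | (q < g) && (e q != q.+1)]|.
  apply: subset_leq_card; apply/subsetP => q; rewrite !inE => /andP[hq].
  rewrite /h2 val_ordn; last by have := e_bnd q; lia.
  move=> hq2.
  have qp : (q : nat) <= p'.
    rewrite leqNgt; apply/negP => l; have := s3 _ _ l ne'.
    rewrite -/(e q) -/(e p') hp'; lia.
  have qk := ltn_ord q.
  apply/andP; split; first lia.
  apply/eqP; lia.
have wi : injective (widen_ord kn) by move=> a b h; apply/val_inj; exact: (congr1 val h).
have c3 : #|[set q : 'I_k | (q < g) && (e q != q.+1)]| <=
          #|[set j : 'I_n | (j < g) && (j \notin I1)]|.
  rewrite -(card_imset _ wi); apply: subset_leq_card; apply/subsetP => j.
  case/imsetP => q; rewrite !inE => /andP[qg nq] ->; apply/andP; split => //.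
  apply/existsP => -[r /eqP hr]; have {}hr : e r = q.+1 := hr.
  have qk := ltn_ord q.
  have er : e r = r.+1 by apply: s2; rewrite -/(e r) hr.
  have rq : r = q by apply/val_inj; move: er; rewrite hr => -[].
  by move: nq; rewrite -rq er eqxx.
by rewrite c1; apply: leq_trans c2 c3.
Qed.
End B.

Lemma vals_sub (T T' : column n k) : is_spPBW T -> minor_of T = minor_of T' ->
  forall p, exists q, val (T' q) = val (T p).
Proof.
move=> sT eM p.
have hb := bnd T p; have hp := e_pos sT p.
set v := val (T p) in hb hp *.
case: (leqP v n) => hv.
  have : ordn v.-1 \in (minor_of T).2.
    rewrite inE; apply/existsP; exists p; apply/eqP.
    change (v = (val (ordn v.-1)).+1); rewrite val_ordn; lia.
  rewrite eM inE => /existsP[q /eqP hq]; exists q; rewrite hq.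
  change ((val (ordn v.-1)).+1 = v); rewrite val_ordn; lia.
have : ordn (2 * n - v) \in (minor_of T).1.
  rewrite inE; apply/existsP; exists p; apply/eqP.
  change (v = (2 * n).+1 - (val (ordn (2 * n - v))).+1); rewrite val_ordn; lia.
rewrite eM inE => /existsP[q /eqP hq]; exists q; rewrite hq.
change ((2 * n).+1 - (val (ordn (2 * n - v))).+1 = v); rewrite val_ordn; lia.
Qed.

Lemma step_lt (T T' : column n k) (p : 'I_k) : is_spPBW T -> is_spPBW T' ->
  minor_of T' = minor_of T ->
  (forall q : 'I_k, q < p -> val (T q) = val (T' q)) ->
  val (T p) < val (T' p) -> False.
Proof.
move=> sT sT' eM IH lt.
case/spP: (sT) => a1 a2 a3 a4; case/spP: (sT') => b1 b2 b3 b4.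
have [q hq] := vals_sub sT' eM p.
case: (ltngtP q p) => [l|l|/val_inj e].
- have := IH _ l; rewrite hq => /(sp_inj sT') e; rewrite e ltnn in l; done.
- have pk := ltn_ord p.
  have np : val (T p) != p.+1.
    apply/eqP => ep.
    have [r hr] := vals_sub sT (esym eM) p.
    have : val (T' r) <= k by rewrite hr ep.
    move/b2 => er.
    have rp : r = p by apply/val_inj; move: er; rewrite hr ep => -[].
    by subst r; rewrite hr ltnn in lt.
  have := a3 _ _ l np; rewrite hq; lia.
- by move: hq; rewrite e => hq; rewrite hq ltnn in lt.
Qed.

Lemma col_inj (T T' : column n k) : is_spPBW T -> is_spPBW T' ->
  minor_of T = minor_of T' -> T = T'.
Proof.
move=> sT sT' eM.
suff H : forall m (p : 'I_k), p < m -> val (T p) = val (T' p).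
  by apply/ffunP => p; apply/val_inj; exact: (H p.+1 p (ltnSn _)).
elim=> [//|m IH] p pm; case: (ltnP p m) => [/IH //| pm2].
have IH' : forall q : 'I_k, q < p -> val (T q) = val (T' q).
  by move=> q qp; apply: IH; lia.
case: (ltngtP (val (T p)) (val (T' p))) => [l|l|//].
  by exfalso; exact: (step_lt sT sT' (esym eM) IH' l).
exfalso; apply: (step_lt sT' sT eM _ l) => q h; exact: esym (IH' q h).
Qed.

Section D.
Variables (I1 I2 : {set 'I_n}).
Hypotheses (hk : #|I1| + #|I2| = k) (hc : HC I1 I2).

Definition inS (v : nat) : bool :=
  [exists j in I1, v == j.+1] || [exists j in I2, v == 2 * n - j].

Lemma inS_lo (j : 'I_n) : inS j.+1 = (j \in I1).
Proof.
apply/orP/idP => [[/existsP[j' /andP[j1 /eqP e]] | /existsP[j' /andP[j2 /eqP e]]] | jI].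
- by have -> : j = j' by apply/val_inj; case: e.
- have := ltn_ord j; have := ltn_ord j'; lia.
by left; apply/existsP; exists j; rewrite jI eqxx.
Qed.

Lemma inS_hi (j : 'I_n) : inS (2 * n - j) = (j \in I2).
Proof.
have jn := ltn_ord j.
apply/orP/idP => [[/existsP[j' /andP[j1 /eqP e]] | /existsP[j' /andP[j2 /eqP e]]] | jI].
- have := ltn_ord j'; lia.
- have -> : j = j' by apply/val_inj; have := ltn_ord j'; rewrite /=; lia.
  done.
by right; apply/existsP; exists j; rewrite jI eqxx.
Qed.

Lemma inS_rng v : inS v -> 0 < v <= 2 * n.
Proof.
case/orP => /existsP[j /andP[_ /eqP ->]]; have := ltn_ord j; lia.
Qed.

Lemma inS0 : inS 0 = false.
Proof. by apply/negbTE/negP => /inS_rng. Qed.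

Definition f1 (j : 'I_n) : 'I_(2 * n).+1 := inord j.+1.
Definition f2 (j : 'I_n) : 'I_(2 * n).+1 := inord (2 * n - j).
Lemma f1K j : val (f1 j) = j.+1.
Proof. by rewrite /f1 /= inordK //; have := ltn_ord j; lia. Qed.
Lemma f2K j : val (f2 j) = 2 * n - j.
Proof. by rewrite /f2 /= inordK //; have := ltn_ord j; lia. Qed.

Lemma Sset_eq : [set v : 'I_(2 * n).+1 | inS v] = f1 @: I1 :|: f2 @: I2.
Proof.
apply/setP => v; rewrite inE in_setU /inS; congr orb.
  apply/existsP/imsetP => [[j /andP[jI /eqP e]] | [j jI ->]].
    by exists j => //; apply/val_inj; rewrite f1K.
  by exists j; rewrite jI f1K eqxx.
apply/existsP/imsetP => [[j /andP[jI /eqP e]] | [j jI ->]].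
  by exists j => //; apply/val_inj; rewrite f2K.
by exists j; rewrite jI f2K eqxx.
Qed.

Lemma Sset_card : #|[set v : 'I_(2 * n).+1 | inS v]| = k.
Proof.
rewrite Sset_eq card_disjU.
  rewrite !card_imset ?hk // => a b /(congr1 val).
    by rewrite !f2K /= => e; apply/val_inj => /=; have := ltn_ord a; have := ltn_ord b; lia.
  by rewrite !f1K => -[e]; apply/val_inj.
apply/setP => v; rewrite !inE; apply/negbTE/andP => -[/imsetP[a _ ->] /imsetP[b _]].
move/(congr1 val); rewrite f1K f2K; have := ltn_ord a; have := ltn_ord b; lia.
Qed.

Lemma count_inS : count inS (iota 0 (2 * n).+1) = k.
Proof. by rewrite count_card Sset_card. Qed.

Definition sq := [seq v <- iota k.+1 (2 * n - k) | inS v].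
Definition rk q := count (fun i => ~~ inS i.+1) (iota 0 q).
Definition ent q := if inS q.+1 then q.+1 else nth 0 sq (size sq - (rk q).+1).

Lemma sq_sorted : sorted ltn sq.
Proof. exact: (sorted_filter ltn_trans _ (iota_ltn_sorted _ _)). Qed.

Lemma mem_sq v : (v \in sq) = inS v && (k < v <= 2 * n).
Proof.
rewrite mem_filter mem_iota; congr andb; apply/idP/idP; lia.
Qed.

Lemma size_sq : size sq = rk k.
Proof.
have e := count_inS.
rewrite (_ : (2 * n).+1 = k.+1 + (2 * n - k)) in e; last lia.
rewrite iotaD count_cat add0n in e.
rewrite (_ : iota 0 k.+1 = 0 :: iota 1 k) // in e.
move: e; rewrite /= inS0 add0n.
rewrite (_ : iota 1 k = map succn (iota 0 k)); last by rewrite -(iotaDl 1 0).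
rewrite count_map size_filter => e.
have := count_predC (fun i => inS i.+1) (iota 0 k); rewrite size_iota /rk.
change (count (fun i => inS i.+1) (iota 0 k) + count (fun i => ~~ inS i.+1) (iota 0 k) = k ->
  count inS (iota k.+1 (2*n-k)) = count (fun i => ~~ inS i.+1) (iota 0 k)).
have {}e : count (fun i => inS i.+1) (iota 0 k) + count inS (iota k.+1 (2 * n - k)) = k := e.
lia.
Qed.

Lemma rk_add p q : p <= q -> rk q = rk p + count (fun i => ~~ inS i.+1) (iota p (q - p)).
Proof. by move=> pq; rewrite /rk -{1}(subnKC pq) iotaD count_cat. Qed.

Lemma rk_mono p q : p <= q -> rk p <= rk q.
Proof. by move=> pq; rewrite (rk_add pq) leq_addr. Qed.

Lemma rk_S p : rk p.+1 = rk p + ~~ inS p.+1.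
Proof. by rewrite (rk_add (leqnSn p)) subSnn /= addn0. Qed.

Lemma rk_lt p q : p < q -> ~~ inS p.+1 -> rk p < rk q.
Proof. by move=> pq np; apply: leq_trans (rk_mono pq); rewrite rk_S np addn1. Qed.

Lemma ent_nf q : q < k -> ~~ inS q.+1 ->
  [/\ ent q = nth 0 sq (size sq - (rk q).+1), size sq - (rk q).+1 < size sq,
      inS (ent q) & k < ent q <= 2 * n].
Proof.
move=> qk nq.
have h : rk q < size sq by rewrite size_sq; exact: rk_lt.
have i : size sq - (rk q).+1 < size sq by lia.
have := mem_nth 0 i; rewrite mem_sq => /andP[a b].
by rewrite /ent (negbTE nq).
Qed.

Lemma ent_fx q : inS q.+1 -> ent q = q.+1.
Proof. by rewrite /ent => ->. Qed.

Lemma ent_bnd q : q < k -> ent q <= 2 * n.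
Proof.
move=> qk; case: (boolP (inS q.+1)) => h.
  by rewrite ent_fx //; lia.
by case: (ent_nf qk h) => _ _ _ /andP[].
Qed.

Lemma ent_inS q : q < k -> inS (ent q).
Proof.
move=> qk; case: (boolP (inS q.+1)) => h; first by rewrite ent_fx.
by case: (ent_nf qk h).
Qed.

Definition col : column n k := [ffun q : 'I_k => inord (ent q)].

Lemma colE q : val (col q) = ent q.
Proof. by rewrite ffunE /= inordK // ltnS ent_bnd. Qed.

Lemma rk_card (p : nat) : p <= n -> rk p = #|[set j : 'I_n | (j < p) && (j \notin I1)]|.
Proof.
move=> pn; rewrite /rk -(count_lt_iota _ pn) count_card.
by apply: eq_card => j; rewrite !inE -inS_lo.
Qed.

Lemma cnt_hi (P : 'I_n) : count (fun v => 2 * n - P < v) sq = #|[set j in I2 | P > j]|.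
Proof.
have Pn := ltn_ord P.
rewrite /sq count_filter; set Q := predI _ _.
have e0 : count Q (iota 0 k.+1) = 0.
  apply/eqP; rewrite -leqn0 leqNgt -has_count; apply/hasP => -[v].
  rewrite mem_iota; case/andP => _ a; rewrite /Q /=; case/andP => b _; lia.
have -> : count Q (iota k.+1 (2 * n - k)) = count Q (iota 0 (2 * n).+1).
  rewrite (_ : (2 * n).+1 = k.+1 + (2 * n - k)); last lia.
  by rewrite iotaD count_cat e0.
rewrite /Q.
rewrite count_card -[RHS](card_in_imset (f := f2)); last first.
  move=> a b _ _ /(congr1 val); rewrite !f2K /= => e; apply/val_inj => /=.
  have := ltn_ord a; have := ltn_ord b; lia.
apply: eq_card => v; rewrite !inE; apply/andP/imsetP => [[a b] | [j]].
  case/orP: b => /existsP[j /andP[jI /eqP ev]]; have := ltn_ord j.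
    by rewrite ev in a; lia.
  move=> jn; exists j; last by apply/val_inj; rewrite f2K.
  rewrite inE jI /=; rewrite ev in a; lia.
rewrite inE => /andP[jI jP] ->; rewrite f2K inS_hi jI; split => //.
have := ltn_ord j; lia.
Qed.

Lemma col_iii (p p' : 'I_k) : p.+1 < k -> ent p = p.+1 ->
  ent p' = (2 * n).+1 - p.+1 -> (p' : nat) < p.
Proof.
move=> pk ep ep'.
have pn : (p : nat) < n by lia.
have p'k := ltn_ord p'.
have fp : inS p.+1.
  apply/negPn/negP => nf; case: (ent_nf (ltn_ord p) nf) => _ _ _ /andP[a _]; lia.
have ep2 : ent p' = 2 * n - p by lia.
have nfp' : ~~ inS p'.+1.
  apply/negP => f; move: ep2; rewrite ent_fx //; lia.
case: (ent_nf p'k nfp') => E I sI /andP[rg1 rg2].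
set P := ordn p.
have vP : (P : nat) = p := val_ordn pn.
have P1 : P \in I1 by rewrite -inS_lo vP.
have P2 : P \in I2 by rewrite -inS_hi vP -ep2.
rewrite ltnNge; apply/negP => hp'.
have lt : (p : nat) < p'.
  rewrite leq_eqVlt in hp'; case/orP: hp' => [/eqP e|//].
  by move: nfp'; rewrite -e fp.
have H := hc (_ : P \in I1 :&: I2); rewrite in_setI P1 P2 in H.
have {}H := H isT.
rewrite (HC_equiv P1 P2) (E3 P2) -rk_card ?vP in H; last lia.
have r1 : rk p <= rk p' by apply: rk_mono; lia.
have r3 := cnt_hi P; rewrite vP in r3.
set idx := size sq - (rk p').+1 in E I.
have r2 : rk p' <= count (fun v => 2 * n - p < v) sq.
  rewrite -(cat_take_drop idx.+1 sq) count_cat.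
  have rs : rk p' < size sq by rewrite size_sq; apply: rk_lt nfp'.
  have sd : size (drop idx.+1 sq) = rk p' by rewrite size_drop; lia.
  suff -> : count (fun v => 2 * n - p < v) (drop idx.+1 sq) = rk p' by lia.
  apply/eqP; rewrite -sd -all_count; apply/(all_nthP 0) => t; rewrite sd => ht.
  rewrite nth_drop -ep2 E; apply: nth_smono; [exact: sq_sorted | lia | lia].
lia.
Qed.

Lemma col_sp : is_spPBW col.
Proof.
apply/and4P; split.
- apply/forallP => q; rewrite colE.
  by have /inS_rng/andP[] := ent_inS (ltn_ord q).
- apply/forallP => q; apply/implyP; rewrite colE => h.
  case: (boolP (inS q.+1)) => f; first by rewrite ent_fx.
  case: (ent_nf (ltn_ord q) f) => _ _ _ /andP[a _]; lia.
- apply/forallP => p1; apply/forallP => p2; apply/implyP; rewrite !colE.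
  case/andP => l np.
  have nf1 : ~~ inS p1.+1 by apply/negP => f; rewrite ent_fx // eqxx in np.
  case: (ent_nf (ltn_ord p1) nf1) => E1 I1' _ /andP[a1 _].
  case: (boolP (inS p2.+1)) => f2'.
    rewrite ent_fx //; have := ltn_ord p2; lia.
  case: (ent_nf (ltn_ord p2) f2') => E2 I2' _ _.
  have r := rk_lt l nf1.
  rewrite E1 E2; apply: nth_smono; [exact: sq_sorted | | exact: I1'].
  have := ltn_ord p2; have : rk p2 < size sq.
    rewrite size_sq; apply: rk_lt f2'; exact: ltn_ord.
  lia.
- apply/forallP => p; apply/forallP => p'; apply/implyP; rewrite !colE.
  case/and3P => a /eqP b /eqP c; exact: col_iii.
Qed.

Lemma col_hit (v : 'I_(2 * n).+1) : inS v -> exists q, val (col q) = v.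
Proof.
have inj := sp_inj col_sp.
have sub : [set col q | q in [set: 'I_k]] \subset [set x : 'I_(2 * n).+1 | inS x].
  apply/subsetP => x /imsetP[q _ ->]; rewrite inE colE; exact: ent_inS.
have cd : #|[set col q | q in [set: 'I_k]]| = k.
  rewrite card_imset ?cardsT ?card_ord // => a b h; apply: inj; exact: (congr1 val h).
have eq : [set col q | q in [set: 'I_k]] = [set x : 'I_(2 * n).+1 | inS x].
  by apply/eqP; rewrite eqEcard sub Sset_card cd leqnn.
move=> hv; have : v \in [set x : 'I_(2 * n).+1 | inS x] by rewrite inE.
by rewrite -eq => /imsetP[q _ ->]; exists q.
Qed.

Lemma col_minor : minor_of col = (I2, I1).
Proof.
rewrite /minor_of; congr pair; apply/setP => j; rewrite inE.
  apply/existsP/idP => [[p /eqP hp] | jI].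
    rewrite -inS_hi; have := ent_inS (ltn_ord p); rewrite -colE hp.
    by rewrite subSS.
  have hv : inS (val (f2 j)) by rewrite f2K inS_hi.
  have [q hq] := col_hit hv.
  by exists q; rewrite hq f2K subSS.
apply/existsP/idP => [[p /eqP hp] | jI].
  by rewrite -inS_lo; have := ent_inS (ltn_ord p); rewrite -colE hp.
have hv : inS (val (f1 j)) by rewrite f1K inS_lo.
have [q hq] := col_hit hv.
by exists q; rewrite hq f1K.
Qed.
End D.
End Col.

Theorem proposition4p10 (n k : nat) :
  (1 <= n)%N -> (1 <= k <= n)%N ->
  exists f : {m : minor n | is_kminor k m && reverse_admissible m} ->
             {T : column n k | is_spPBW T},
    bijective f /\ (forall m, column_weight (val (f m)) = minor_weight (val m)).
Proof.
move=> n1 /andP[k1 kn].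
have ex : forall m : {m : minor n | is_kminor k m && reverse_admissible m},
    exists T : {ffun 'I_k -> 'I_(2 * n).+1}, is_spPBW (T : column n k) && (minor_of (T : column n k) == val m).
  case=> [[I2 I1]] /= /andP[hk ra].
  have hk' : #|I1| + #|I2| = k by apply/eqP.
  have hc : HC I1 I2 := RA_HC ra.
  exists (col k I1 I2); rewrite (col_sp n1 k1 kn hk' hc) /=.
  by rewrite (col_minor n1 k1 kn hk' hc).
pose F (m : {m : minor n | is_kminor k m && reverse_admissible m}) : column n k :=
  xchoose (ex m).
have FP m : is_spPBW (F m) && (minor_of (F m) == val m) := xchooseP (ex m).
pose f m : {T : column n k | is_spPBW T} := exist _ (F m) (proj1 (andP (FP m))).
have gP (T : {T : column n k | is_spPBW T}) :
    is_kminor k (minor_of (val T)) && reverse_admissible (minor_of (val T)).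
  case: T => T sT /=; rewrite (kminor_of n1 k1 kn sT) /=.
  exact: HC_RA (HC_of n1 k1 kn sT).
pose g T : {m : minor n | is_kminor k m && reverse_admissible m} :=
  exist (fun m => is_kminor k m && reverse_admissible m) (minor_of (val T)) (gP T).
exists f; split.
  exists g.
    move=> m; apply/val_inj => /=; apply/eqP; exact: (proj2 (andP (FP m))).
  move=> T; apply/val_inj => /=.
  case/andP: (FP (g T)) => sF /eqP eF.
  apply: (col_inj n1 k1 kn sF (valP T)); exact: eF.
move=> m /=; rewrite weight_of.
by case/andP: (FP m) => _ /eqP ->.
Qed.
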